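(* Let $m<n$ and let $\mathbf{A}\in\mathbb{R}^{m\times n}$ have rank $m$, partitioned as $\mathbf{A} = [\mathbf{X}\,|\,\mathbf{Y}]$ with $\mathbf{X}\in\mathbb{R}^{m\times m}$ invertible (the first $m$ columns form a full-rank square matrix) and $\mathbf{Y}\in\mathbb{R}^{m\times(n-m)}$. Let $\mathbf{A} = \mathbf{Q}\mathbf{R}$ be its QR decomposition with $\mathbf{Q}\in\mathbb{R}^{m\times m}$ orthogonal and $\mathbf{R}\in\mathbb{R}^{m\times n}$ upper triangular, partitioned as $\mathbf{R} = [\mathbf{U}\,|\,\mathbf{V}]$ with $\mathbf{U}\in\mathbb{R}^{m\times m}$ (upper triangular, invertible, $\mathbf{X}=\mathbf{Q}\mathbf{U}$) and $\mathbf{V}\in\mathbb{R}^{m\times(n-m)}$ ($\mathbf{Y}=\mathbf{Q}\mathbf{V}$). Suppose $\mathbf{A}'\mapsto(\mathbf{Q}(\mathbf{A}'),\mathbf{R}(\mathbf{A}'))$ is a differentiable map on a neighborhood of $\mathbf{A}$ giving such a decomposition for each $\mathbf{A}'$ (e.g. normalized so $\mathbf{R}$ has positive diagonal). Let $\bar{\mathbf{Q}}\in\mathbb{R}^{m\times m}$ and $\bar{\mathbf{R}} = [\bar{\mathbf{U}}\,|\,\bar{\mathbf{V}}]\in\mathbb{R}^{m\times n}$ be arbitrary upstream gradients, with $\bar{\mathbf{U}}\in\mathbb{R}^{m\times m}$, $\bar{\mathbf{V}}\in\mathbb{R}^{m\times(n-m)}$. Then the reverse-mode gradient is $\bar{\mathbf{A}}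 = [\bar{\mathbf{X}}\,|\,\bar{\mathbf{Y}}]$ with $$\bar{\mathbf{X}} = \left[\bar{\mathbf{Q}}_{prime} + \mathbf{Q}\,\mathrm{copyltu}(\mathbf{M})\right]\mathbf{U}^{-T},\qquad \bar{\mathbf{Y}} = \mathbf{Q}\bar{\mathbf{V}},$$ where $\bar{\mathbf{Q}}_{prime} = \bar{\mathbf{Q}} + \mathbf{Y}\bar{\mathbf{V}}^T$ and $\mathbf{M} = \mathbf{U}\bar{\mathbf{U}}^T - \bar{\mathbf{Q}}_{prime}^T\mathbf{Q}$.
   Context: Reverse-mode gradient: given a differentiable map $\mathbf{A}\mapsto(\mathbf{Q}(\mathbf{A}),\mathbf{R}(\mathbf{A}))$ and upstream matrices $\bar{\mathbf{Q}},\bar{\mathbf{R}}$ of the same shapes as $\mathbf{Q},\mathbf{R}$, the gradient $\bar{\mathbf{A}}$ is the unique matrix of the shape of $\mathbf{A}$ such that $\mathrm{Tr}(\bar{\mathbf{A}}^T d\mathbf{A}) = \mathrm{Tr}(\bar{\mathbf{Q}}^T d\mathbf{Q}) + \mathrm{Tr}(\bar{\mathbf{R}}^T d\mathbf{R})$ for every direction $d\mathbf{A}$, where $d\mathbf{Q}, d\mathbf{R}$ are the directional derivatives of $\mathbf{Q},\mathbf{R}$ at $\mathbf{A}$ in direction $d\mathbf{A}$. For a square matrix $\mathbf{M}$, $\mathrm{copyltu}(\mathbf{M})$ is the symmetric matrix with entries $\mathrm{copyltu}(\mathbf{M})_{ij} = \mathbf{M}_{\max(i,j),\min(i,j)}$;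 equivalently $\mathrm{copyltu}(\mathbf{M}) = \mathrm{sym}(\mathbf{M}\circ\mathbf{E})$, where $\mathrm{sym}(\mathbf{B}) = (\mathbf{B}+\mathbf{B}^T)/2$, $\circ$ is the Hadamard product and $\mathbf{E}$ has $e_{ij}=0$ if $i<j$, $1$ if $i=j$, $2$ if $i>j$. $\mathbf{U}^{-T} = (\mathbf{U}^{-1})^T$. *)

(* Defs.v *)
From HB Require Import structures.
From mathcomp Require Import all_boot all_order all_algebra.
From mathcomp Require Import all_classical all_reals all_analysis.
Set Implicit Arguments. Unset Strict Implicit. Unset Printing Implicit Defensive.
Import Order.TTheory GRing.Theory Num.Theory.
Local Open Scope ring_scope.

Definition copyltu (R : Type) (m : nat) (M : 'M[R]_m) : 'M[R]_m :=
  \matrix_(i, j) if (j <= i)%N then M i j else M j i.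

Definition upper_trig (R : pzRingType) (m n : nat) (A : 'M[R]_(m, n)) : Prop :=
  forall (i : 'I_m) (j : 'I_n), (j < i)%N -> A i j = 0.

Definition orthogonal_mx (R : pzRingType) (m : nat) (Q : 'M[R]_m) : Prop :=
  Q^T *m Q = 1%:M.

(* Main.v *)
Require Import Defs.
From HB Require Import structures.
From mathcomp Require Import all_boot all_order all_algebra.
From mathcomp Require Import all_classical all_reals all_analysis.
From mathcomp Require Import ring lra.
Import Order.TTheory GRing.Theory Num.Theory numFieldNormedType.Exports.
Local Open Scope ring_scope.

Section Helpers.
Variable R : realType.

Lemma is_derive_entry p q r s (F : 'M[R]_(p,q) -> 'M[R]_(r,s)) a v i j :
  differentiable F a -> is_derive a v (fun x => F x i j) ('d F a v i j).
Proof.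
move=> dF.
have @f : {linear 'M[R]_(r, s) -> R}.
  by exists (fun N : 'M[R]_(_, _) => N i j); do 2![eexists]; do ?[constructor];
     rewrite ?mxE// => ? *; rewrite ?mxE//; move=> ?; rewrite !mxE.
have fc : continuous f by exact: coord_continuous.
have df : differentiable f (F a) by exact: linear_differentiable.
have -> : (fun x => F x i j) = f \o F by [].
have dc : differentiable (f \o F) a by exact: differentiable_comp.
apply: DeriveDef; first exact: diff_derivable.
by rewrite deriveE // diff_comp // diff_lin.
Qed.

Lemma is_derive_coord p q (a v : 'M[R]_(p,q)) i j :
  is_derive a v (fun x : 'M[R]_(p,q) => x i j) (v i j).
Proof.
have [dI1 dI2] : is_diff a (id : 'M[R]_(p,q) -> 'M[R]_(p,q)) id by exact: is_diff_id.
have := @is_derive_entry p q p q id a v i j dI1.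
by rewrite dI2.
Qed.


Lemma d_sum_prod p q n (f g : 'I_n -> 'M[R]_(p,q) -> R) df dg a v
  (h : 'M[R]_(p,q) -> R) dh :
  (forall l, is_derive a v (f l) (df l)) -> (forall l, is_derive a v (g l) (dg l)) ->
  (\forall x \near a, \sum_l f l x * g l x = h x) -> is_derive a v h dh ->
  dh = \sum_l (f l a * dg l + g l a * df l).
Proof.
move=> hf hg hn hh.
have h1 : is_derive a v (\sum_(l < n) (f l * g l))
   (\sum_(l < n) (f l a *: dg l + g l a *: df l)).
  by apply: is_derive_sum => l; apply: is_deriveM.
have h2 : is_derive a v h (\sum_(l < n) (f l a *: dg l + g l a *: df l)).
  apply: near_eq_is_derive h1; near=> x; rewrite fct_sumE; exact: (near hn).
rewrite -(@derive_val _ _ _ _ _ _ _ hh) (@derive_val _ _ _ _ _ _ _ h2).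
by apply: eq_bigr => l _.
Unshelve. all: by end_near.
Qed.


Lemma upper_mul n (A B : 'M[R]_n) :
  upper_trig A -> upper_trig B -> upper_trig (A *m B).
Proof.
move=> hA hB i j ji; rewrite mxE big1 // => l _.
case: (ltnP l i) => li; first by rewrite hA // mul0r.
by rewrite hB ?mulr0 //; apply: leq_trans ji li.
Qed.

Lemma upper_inv n (U : 'M[R]_n) :
  upper_trig U -> U \in unitmx -> upper_trig (invmx U).
Proof.
move=> hU uU.
have trU : is_trig_mx U^T.
  by apply/is_trig_mxP => i j ij; rewrite mxE hU.
have dU : forall j, U j j != 0.
  move=> j; move: uU; rewrite unitmxE -det_tr det_trig // unitfE.
  rewrite (bigD1 j) //= mulf_eq0 negb_or mxE => /andP[] //.
set W := invmx U.
have WU : W *m U = 1%:M by rewrite mulVmx.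
suff H : forall k (i j : 'I_n), (j : nat) = k -> (j < i)%N -> W i j = 0.
  by move=> i j ji; apply: (H j).
elim/ltn_ind => k IH i j jk ji.
have e : (W *m U) i j = 0.
  by rewrite WU mxE; case: eqP => // ij; move: ji; rewrite ij ltnn.
move: e; rewrite mxE (bigD1 j) //= big1 ?addr0.
  by move/eqP; rewrite mulf_eq0 (negbTE (dU j)) orbF => /eqP.
move=> l lj; case: (ltnP j l) => jl; first by rewrite hU ?mulr0.
have lj' : (l < j)%N by rewrite ltn_neqAle jl andbT; apply: contra lj => /eqP/val_inj ->.
by rewrite (IH l) ?mul0r //; [rewrite -jk | apply: ltn_trans ji].
Qed.

Lemma copyltu_tr n (M : 'M[R]_n) : (copyltu M)^T = copyltu M.
Proof.
apply/matrixP => i j; rewrite !mxE.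
case: (ltngtP i j) => [ij|ji|/val_inj->] //.
Qed.

Lemma tr_copyltu n (M D : 'M[R]_n) :
  upper_trig D -> \tr ((copyltu M - M) *m D) = 0.
Proof.
move=> hD; rewrite /mxtrace big1 // => i _; rewrite mxE big1 // => l _.
rewrite !mxE; case: (leqP l i) => li; first by rewrite subrr mul0r.
by rewrite hD ?mulr0.
Qed.

Lemma tr_sym_skew n (S C : 'M[R]_n) :
  S^T = S -> C^T = - C -> \tr (S *m C) = 0.
Proof.
move=> hS hC.
have : \tr (S *m C) = - \tr (S *m C).
  by rewrite -{1}mxtrace_tr trmx_mul hS hC mulNmx linearN /= mxtrace_mulC.
move/eqP; rewrite -subr_eq0 opprK -mulr2n mulrn_eq0 /= => /eqP //.
Qed.

Lemma tr_blk m n1 n2 (A1 : 'M[R]_(m,n1)) (A2 : 'M[R]_(m,n2)) (B : 'M[R]_(m, n1+n2)) :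
  \tr ((row_mx A1 A2)^T *m B) = \tr (A1^T *m lsubmx B) + \tr (A2^T *m rsubmx B).
Proof.
rewrite -{1}(hsubmxK B) tr_row_mx mul_col_row mxtrace_block //.
Qed.


Lemma alg m k (Q dQ Qbar Ubar : 'M[R]_m) (Rm dR dA A : 'M[R]_(m, m+k))
  (Vbar : 'M[R]_(m,k)) :
  Q^T *m Q = 1%:M -> Q *m Rm = A -> dA = dQ *m Rm + Q *m dR ->
  dQ^T *m Q + Q^T *m dQ = 0 -> upper_trig (lsubmx dR) -> upper_trig (lsubmx Rm) ->
  lsubmx Rm \in unitmx ->
  let U := lsubmx Rm in let Y := rsubmx A in let Rbar := row_mx Ubar Vbar in
  let Qbar' := Qbar + Y *m Vbar^T in let M := U *m Ubar^T - Qbar'^T *m Q in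
  let Xbar := (Qbar' + Q *m copyltu M) *m (invmx U)^T in
  let Ybar := Q *m Vbar in let Abar := row_mx Xbar Ybar in
  \tr (Abar^T *m dA) = \tr (Qbar^T *m dQ) + \tr (Rbar^T *m dR).
Proof.
move=> hQ hA hdA hsk hdU hU uU U Y Rbar Qbar' M Xbar Ybar Abar.
have QQt : Q *m Q^T = 1%:M by apply: mulmx1C.
set V := rsubmx Rm; set dU := lsubmx dR; set dV := rsubmx dR.
set C := Q^T *m dQ.
have hC : C^T = - C.
  by rewrite /C trmx_mul trmxK; apply/eqP; rewrite -addr_eq0 hsk.
have dQE : dQ = Q *m C by rewrite /C mulmxA QQt mul1mx.
clearbody C.
set W := invmx U.
have UW : U *m W = 1%:M by rewrite mulmxV.
have WU : W *m U = 1%:M by rewrite mulVmx.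
set D := dU *m W.
have hD : upper_trig D := @upper_mul _ _ _ hdU (@upper_inv _ _ hU uU).
have dUE : dU = D *m U by rewrite /D -mulmxA WU mulmx1.
clearbody D.
have dXE : lsubmx dA = Q *m ((C + D) *m U).
  by rewrite hdA linearD /= -!mulmx_lsub -/U -/dU dUE dQE -!mulmxA -mulmxDr -mulmxDl.
have dYE : rsubmx dA = Q *m (C *m V + dV).
  by rewrite hdA linearD /= -!mulmx_rsub -/V -/dV dQE -mulmxA -mulmxDr.
have YE : Y = Q *m V by rewrite /Y -hA mulmx_rsub.
set G := Qbar'^T *m Q.
have GE : G = Qbar^T *m Q + Vbar *m V^T.
  by rewrite /G /Qbar' linearD /= mulmxDl trmx_mul trmxK YE trmx_mul -!mulmxA hQ mulmx1.
set K := copyltu M.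
have KT : K^T = K by exact: copyltu_tr.
rewrite /Abar /Rbar !tr_blk -/dU -/dV.
have e1 : \tr (Xbar^T *m lsubmx dA) = \tr (G *m C) + \tr (K *m C) + \tr ((G + K) *m D).
  rewrite dXE /Xbar trmx_mul trmxK linearD /= trmx_mul KT -/W -mulmxA.
  have -> : (Qbar'^T + K *m Q^T) *m (Q *m ((C + D) *m U)) = (G + K) *m (C + D) *m U.
    by rewrite mulmxA (mulmxDl Qbar'^T) -(mulmxA K) hQ mulmx1 -/G mulmxA.
  rewrite mxtrace_mulC -(mulmxA _ U W) UW mulmx1 mulmxDr linearD /= mulmxDl linearD /=.
  by [].
have e2 : \tr (Ybar^T *m rsubmx dA) = \tr (Vbar^T *m dV) - \tr (Vbar *m V^T *m C).
  rewrite dYE /Ybar trmx_mul mulmxA -(mulmxA Vbar^T) hQ mulmx1 mulmxDr linearD /=.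
  have -> : \tr (Vbar^T *m (C *m V)) = - \tr (Vbar *m V^T *m C).
    by rewrite mxtrace_mulC -mxtrace_tr trmx_mul trmxK trmx_mul hC !mulmxN mulmxA linearN.
  by rewrite addrC.
have e3 : \tr (Qbar^T *m dQ) = \tr (G *m C) - \tr (Vbar *m V^T *m C).
  by rewrite GE mulmxDl linearD /= dQE mulmxA addrK.
have e4 : \tr (K *m C) = 0 by exact: tr_sym_skew.
have e5 : \tr (Ubar^T *m dU) = \tr (U *m Ubar^T *m D).
  by rewrite dUE mulmxA mxtrace_mulC mulmxA.
have e6 : \tr ((G + K) *m D) = \tr (U *m Ubar^T *m D).
  have := @tr_copyltu _ M D hD; rewrite -/K /M -/G => h.
  apply/eqP; rewrite -subr_eq0 -linearB /= -mulmxBl -h; apply/eqP.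
  congr (\tr (_ *m _)); by rewrite opprB addrA (addrC K).
rewrite e1 e2 e3 e4 e5 e6; lra.
Qed.


End Helpers.

Theorem proposition2 (R : realType) (m k : nat) (hk : (0 < k)%N)
  (A : 'M[R]_(m, m + k))
  (Qf : 'M[R]_(m, m + k) -> 'M[R]_m) (Rf : 'M[R]_(m, m + k) -> 'M[R]_(m, m + k))
  (hrank : \rank A = m)
  (hX : lsubmx A \in unitmx)
  (hQR : \forall A' \near A,
      [/\ Qf A' *m Rf A' = A', orthogonal_mx (Qf A') & upper_trig (Rf A')])
  (hdQ : \forall A' \near A, differentiable Qf A')
  (hdR : \forall A' \near A, differentiable Rf A')
  (Qbar : 'M[R]_m) (Ubar : 'M[R]_m) (Vbar : 'M[R]_(m, k)) :
  let Q := Qf A in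
  let U := lsubmx (Rf A) in
  let Y := rsubmx A in
  let Rbar := row_mx Ubar Vbar in
  let Qbar' := Qbar + Y *m Vbar^T in
  let M := U *m Ubar^T - Qbar'^T *m Q in
  let Xbar := (Qbar' + Q *m copyltu M) *m (invmx U)^T in
  let Ybar := Q *m Vbar in
  let Abar := row_mx Xbar Ybar in
  forall dA : 'M[R]_(m, m + k),
    \tr (Abar^T *m dA) = \tr (Qbar^T *m 'd Qf A dA) + \tr (Rbar^T *m 'd Rf A dA).
Proof.
move=> Q0 U0 Y0 Rbar0 Qbar'0 M0 Xbar0 Ybar0 Abar0 dA.
have dQA : differentiable Qf A := nbhs_singleton hdQ.
have dRA : differentiable Rf A := nbhs_singleton hdR.
have [hA hQ hU] := nbhs_singleton hQR.
set dQ := 'd Qf A dA; set dR := 'd Rf A dA.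
have hdA : dA = dQ *m Rf A + Qf A *m dR.
  apply/matrixP => i j.
  have := @d_sum_prod R _ _ m (fun l x => Qf x i l) (fun l x => Rf x l j)
    (fun l => dQ i l) (fun l => dR l j) A dA (fun x => x i j) (dA i j).
  move=> /(_ (fun l => @is_derive_entry _ _ _ _ _ _ _ _ _ _ dQA) (fun l => @is_derive_entry _ _ _ _ _ _ _ _ _ _ dRA)).
  move=> /(_ _ (@is_derive_coord _ _ _ _ _ _ _)) ->.
    rewrite !mxE -big_split /=; apply: eq_bigr => l _; rewrite addrC mulrC; congr (_ + _); exact: mulrC.
  by apply: filterS hQR => x [h1 _ _]; rewrite -{3}h1 mxE.
have hsk : dQ^T *m Qf A + (Qf A)^T *m dQ = 0.
  apply/matrixP => i j.
  have := @d_sum_prod R _ _ m (fun l x => Qf x l i) (fun l x => Qf x l j)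
    (fun l => dQ l i) (fun l => dQ l j) A dA (fun x => (1%:M : 'M[R]_m) i j) 0.
  move=> /(_ (fun l => @is_derive_entry _ _ _ _ _ _ _ _ _ _ dQA) (fun l => @is_derive_entry _ _ _ _ _ _ _ _ _ _ dQA)).
  move=> /(_ _ (is_derive_cst _ _ _)) h.
  have hn : \forall x \near A, \sum_l Qf x l i * Qf x l j = (1%:M : 'M[R]_m) i j.
    by apply: filterS hQR => x [_ h2 _]; rewrite -h2 mxE; apply: eq_bigr => l _; rewrite mxE.
  rewrite [RHS]mxE [RHS](h hn) !mxE -big_split /=; apply: eq_bigr => l _.
  by rewrite !mxE addrC mulrC; congr (_ + _); exact: mulrC.
have hdU : upper_trig (lsubmx dR).
  move=> i j ji; rewrite mxE.
  have h1 := @is_derive_entry _ _ _ _ _ _ _ dA i (lshift k j) dRA.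
  have h2 : is_derive A dA (fun x => Rf x i (lshift k j)) 0.
    apply: near_eq_is_derive (is_derive_cst (0 : R) A dA).
    by apply: filterS hQR => x [_ _ h3]; rewrite h3.
  by rewrite -(@derive_val _ _ _ _ _ _ _ h1) (@derive_val _ _ _ _ _ _ _ h2).
have hUu : upper_trig (lsubmx (Rf A)).
  by move=> i j ji; rewrite mxE hU.
have uU : lsubmx (Rf A) \in unitmx.
  by move: hX; rewrite -{1}hA -mulmx_lsub unitmx_mul => /andP[].
exact: (@alg R m k (Qf A) dQ Qbar Ubar (Rf A) dR dA A Vbar hQ hA hdA hsk hdU hUu uU).
Qed.
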